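(* For every field $\mathbb{F}$, $n,d,e\ge1$ and tensors $A:[n]^{2d}\to\mathbb{F}$, $B:[n]^{2e}\to\mathbb{F}$, we have $\rho(A\otimes B)\le n^{-1}\min\{\rho(A),\rho(B)\}$, where $A\otimes B:[n]^{2(d+e)}\to\mathbb{F}$, $(A\otimes B)(x,y)=A(x)B(y)$.
   Context: For a tensor $C:[n]^{2m}\to\mathbb{F}$, $a,b\in\{0,1\}$, $\alpha\in\{0,1\}^{m-1}$: $I_{a,\alpha,b}=[2m]\cap\{a,2+\alpha_1,4+\alpha_2,\dots,2m-2+\alpha_{m-1},2m+b\}$, $J_{a,\alpha,b}=[2m]\cap\{1-a,3-\alpha_1,\dots,2m-1-\alpha_{m-1},2m+1-b\}$ (a partition of $[2m]$); $\mathrm{Mat}_{I,J}(C)$ is the flattening with rows indexed by coordinates in $I$ and columns by those in $J$; $\mathrm{relrk}_{a,\alpha,b}(C)=n^{-m}\mathrm{rank}\,\mathrm{Mat}_{I_{a,\alpha,b},J_{a,\alpha,b}}(C)$; and $\rho(C)=\max_{a,b\in\{0,1\}}\min\sum_{\alpha\in\{0,1\}^{m-1}}\mathrm{relrk}_{a,\alpha,b}(X_\alpha)$, the minimum over families $X_\alpha:[n]^{2m}\to\mathbb{F}$ with $C=\sum_\alpha X_\alpha$. *)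

(* Defs.v *)
From mathcomp Require Import all_boot all_order all_algebra.
From mathcomp Require Import boolp.
Set Implicit Arguments. Unset Strict Implicit. Unset Printing Implicit Defensive.
Import Order.TTheory GRing.Theory Num.Theory.
Local Open Scope ring_scope.

(* A tensor C : [n]^{2m} -> F.  Paper coordinate c in [2m] is the ordinal c-1. *)
Definition tensor (F : Type) (n m : nat) := {ffun 'I_(2 * m) -> 'I_n} -> F.

(* alpha in {0,1}^{m-1}: alpha_k (k = 1..m-1) is  alpha (k-1). *)
Definition bvec (m : nat) := {ffun 'I_(m.-1) -> bool}.

(* I_{a,alpha,b} = [2m] \cap {a, 2+alpha_1, ..., 2m-2+alpha_{m-1}, 2m+b}
   (as a set of ordinals j, paper coordinate j+1). *)
Definition Iset (m : nat) (a : bool) (al : bvec m) (b : bool) : {set 'I_(2 * m)} :=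
  [set j : 'I_(2 * m) | [|| (j.+1 == a :> nat), (j.+1 == 2 * m + b)%N
                          | [exists k : 'I_(m.-1), j.+1 == (2 * k.+1 + al k)%N]]].

Definition Jset (m : nat) (a : bool) (al : bvec m) (b : bool) : {set 'I_(2 * m)} :=
  ~: Iset a al b.

Section Flatten.
Variables (F : fieldType) (n m : nat).
Variables (I : {set 'I_(2 * m)}).

Definition rowT := {ffun {j : 'I_(2 * m) | j \in I} -> 'I_n}.
Definition colT := {ffun {j : 'I_(2 * m) | j \notin I} -> 'I_n}.

Definition merge (f : rowT) (g : colT) : {ffun 'I_(2 * m) -> 'I_n} :=
  [ffun k => match boolP (k \in I) with
             | AltTrue h => f (exist _ k h)
             | AltFalse h => g (exist _ k h)
             end].

Definition flat (C : tensor F n m) : 'M[F]_(#|{: rowT}|, #|{: colT}|) :=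
  \matrix_(i, j) C (merge (enum_val i) (enum_val j)).
End Flatten.

Definition rk (F : fieldType) (n m : nat) (a : bool) (al : bvec m) (b : bool)
  (C : tensor F n m) : nat := \rank (flat (Iset a al b) C).

Definition relrk (F : fieldType) (n m : nat) (a : bool) (al : bvec m) (b : bool)
  (C : tensor F n m) : rat := (rk a al b C)%:R / (n ^ m)%:R.

Definition decomp_val (F : fieldType) (n m : nat) (a b : bool) (C : tensor F n m)
  (r : nat) : Prop :=
  exists X : bvec m -> tensor F n m,
    (forall x, C x = \sum_(al : bvec m) X al x) /\
    (\sum_(al : bvec m) rk a al b (X al))%N = r.

Lemma decomp_val_ex (F : fieldType) (n m : nat) (a b : bool) (C : tensor F n m) :
  exists r, `[< decomp_val a b C r >].
Proof.
pose a0 : bvec m := [ffun => false].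
pose X := fun al : bvec m => if al == a0 then C else (fun _ => 0 : F).
exists (\sum_(al : bvec m) rk a al b (X al))%N; apply/asboolP; exists X; split=> //.
move=> x; rewrite (bigD1 a0) //= big1 ?addr0 /X ?eqxx //.
by move=> al /negbTE ->.
Qed.

Definition minrk (F : fieldType) (n m : nat) (a b : bool) (C : tensor F n m) : nat :=
  ex_minn (decomp_val_ex a b C).

Definition minrel (F : fieldType) (n m : nat) (a b : bool) (C : tensor F n m) : rat :=
  (minrk a b C)%:R / (n ^ m)%:R.

Definition rho (F : fieldType) (n m : nat) (C : tensor F n m) : rat :=
  Num.max (Num.max (minrel false false C) (minrel false true C))
          (Num.max (minrel true false C) (minrel true true C)).

Lemma tens_eq (d e : nat) : (2 * d + 2 * e = 2 * (d + e))%N.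
Proof. by rewrite mulnDr. Qed.

Definition tensor_prod (F : fieldType) (n d e : nat) (A : tensor F n d)
  (B : tensor F n e) : tensor F n (d + e) :=
  fun z => A [ffun k : 'I_(2 * d) => z (cast_ord (tens_eq d e) (lshift (2 * e) k))]
         * B [ffun k : 'I_(2 * e) => z (cast_ord (tens_eq d e) (rshift (2 * d) k))].

(* Main.v *)
Require Import Defs.
From mathcomp Require Import all_boot all_order all_algebra.
From mathcomp Require Import boolp zify ring.
Set Implicit Arguments. Unset Strict Implicit. Unset Printing Implicit Defensive.
Import Order.TTheory GRing.Theory Num.Theory.

Definition alN (m : nat) (al : bvec m) (x : nat) : bool :=
  if (insub x : option 'I_(m.-1)) is Some k then al k else false.

Lemma alN_ord m (al : bvec m) (k : 'I_(m.-1)) : alN al k = al k.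
Proof. by rewrite /alN valK. Qed.

Lemma Iset_memE m a (al : bvec m) b (j : 'I_(2 * m)) :
  (j \in Iset a al b) = [|| j.+1 == a, j.+1 == (2 * m + b)%N |
     (0 < j) && (j.+1 < 2 * m) && (alN al ((j - 1) %/ 2) == (j %% 2 == 0))].
Proof.
rewrite inE; congr [|| _, _ | _]; apply/existsP/idP.
- case=> k /eqP hk; have hkm : (nat_of_ord k < m - 1)%N by rewrite subn1; exact: ltn_ord.
  rewrite (_ : ((j - 1) %/ 2)%N = k); last by case: (al k) hk => /= hk; lia.
  rewrite (alN_ord al k).
  by case: (al k) hk => /= hk; lia.
- move=> /andP [/andP [h0 h1] /eqP h2].
  have hk : ((j - 1) %/ 2 < m.-1)%N by rewrite -subn1; lia.
  exists (Ordinal hk); rewrite -alN_ord /= h2; apply/eqP.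
  by case: eqP => h /=; lia.
Qed.

Section Rank.
Variable F : fieldType.
Local Open Scope ring_scope.

Lemma rank_sum_le (I : finType) (P : pred I) p q (A : I -> 'M[F]_(p,q)) :
  (\rank (\sum_(i | P i) A i)%R <= \sum_(i | P i) \rank (A i))%N.
Proof.
apply: (big_ind2 (fun M r => \rank M <= r)%N) => //.
- by rewrite mxrank0.
- by move=> M1 r1 M2 r2 h1 h2; apply: leq_trans (mxrank_add _ _) (leq_add h1 h2).
Qed.

Lemma rank_prod p q p1 q1 p2 q2 (M : 'M[F]_(p,q)) (X : 'M[F]_(p1,q1)) (Y : 'M[F]_(p2,q2))
  (f : 'I_p -> 'I_p1) (g : 'I_q -> 'I_q1) (h1 : 'I_p -> 'I_p2) (h2 : 'I_q -> 'I_q2) :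
  (forall i j, M i j = X (f i) (g j) * Y (h1 i) (h2 j)) ->
  (\rank M <= \rank X * \rank Y)%N.
Proof.
move=> hM.
have -> : M = (\sum_(st : 'I_(\rank X) * 'I_(\rank Y))
   ((\col_i (col_base X (f i) st.1 * col_base Y (h1 i) st.2)) *m
    (\row_j (row_base X st.1 (g j) * row_base Y st.2 (h2 j)))))%R.
  apply/matrixP => i j; rewrite hM summxE -{1}(mulmx_base X) -{1}(mulmx_base Y) !mxE.
  rewrite big_distrl /= -(pair_bigA _ (fun s t => 
     ((\col_i (col_base X (f i) s * col_base Y (h1 i) t)) *m
    (\row_j (row_base X s (g j) * row_base Y t (h2 j)))) i j)) /=.
  apply: eq_bigr => s _.
  rewrite big_distrr /=; apply: eq_bigr => t _.
  by rewrite !mxE big_ord1 !mxE mulrACA.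
have H := (@rank_sum_le _ xpredT _ _ (fun st : ('I_(\rank X) * 'I_(\rank Y))%type => ((\col_i (col_base X (f i) st.1 * col_base Y (h1 i) st.2)) *m (\row_j (row_base X st.1 (g j) * row_base Y st.2 (h2 j)))))). apply: (leq_trans H).
have -> : (\rank X * \rank Y = \sum_(st : ('I_(\rank X) * 'I_(\rank Y))%type) 1)%N.
  by rewrite sum1_card card_prod !card_ord.
apply: leq_sum => st _; exact: leq_trans (mxrankM_maxl _ _) (rank_leq_col _).
Qed.
End Rank.

Section Gen.
Variables (F : fieldType) (n : nat) (z0 : 'I_n).
Local Open Scope ring_scope.

Definition fullr m (I : {set 'I_(2 * m)}) (r : rowT n I) (k : 'I_(2 * m)) : 'I_n :=
  if (insub k : option {j : 'I_(2 * m) | j \in I}) is Some s then r s else z0.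
Definition fullc m (I : {set 'I_(2 * m)}) (r : colT n I) (k : 'I_(2 * m)) : 'I_n :=
  if (insub k : option {j : 'I_(2 * m) | j \notin I}) is Some s then r s else z0.

Lemma merge_in m (I : {set 'I_(2 * m)}) (r : rowT n I) (c : colT n I) k (h0 : k \in I) :
  Defs.merge r c k = r (exist _ k h0).
Proof.
rewrite ffunE.
destruct (boolP (k \in I)) as [h|h].
- by f_equal; apply: val_inj.
- by exfalso; exact: (negP h h0).
Qed.

Lemma merge_out m (I : {set 'I_(2 * m)}) (r : rowT n I) (c : colT n I) k (h0 : k \notin I) :
  Defs.merge r c k = c (exist _ k h0).
Proof.
rewrite ffunE.
destruct (boolP (k \in I)) as [h|h].
- by exfalso; exact: (negP h0 h).
- by f_equal; apply: val_inj.
Qed.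

Lemma merge_full m (I : {set 'I_(2 * m)}) (r : rowT n I) (c : colT n I) k :
  Defs.merge r c k = if k \in I then fullr r k else fullc c k.
Proof.
rewrite /fullr /fullc; case: ifP => hk.
- case: insubP => [t ht hv|hn]; last by rewrite hk in hn.
  rewrite (merge_in r c hk); f_equal; apply: val_inj; by rewrite /= -hv.
- have hk' : k \notin I by rewrite hk.
  case: insubP => [t ht hv|hn]; last by rewrite hk' in hn.
  rewrite (merge_out r c hk'); f_equal; apply: val_inj; by rewrite /= -hv.
Qed.

Lemma fullr_ffun m (I : {set 'I_(2 * m)}) (w : 'I_(2 * m) -> 'I_n) k : k \in I ->
  fullr ([ffun t => w (val t)] : rowT n I) k = w k.
Proof.
move=> hk; rewrite /fullr; case: insubP => [t _ hv|hn]; last by rewrite hk in hn.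
by rewrite ffunE hv.
Qed.

Lemma fullc_ffun m (I : {set 'I_(2 * m)}) (w : 'I_(2 * m) -> 'I_n) k : k \notin I ->
  fullc ([ffun t => w (val t)] : colT n I) k = w k.
Proof.
move=> hk; rewrite /fullc; case: insubP => [t _ hv|hn]; last by rewrite hk in hn.
by rewrite ffunE hv.
Qed.

Lemma rk_gen m m1 m2 (I : {set 'I_(2 * m)}) (I1 : {set 'I_(2 * m1)})
  (P1 : 'I_(2 * m1) -> 'I_(2 * m)) (P2 : 'I_(2 * m2) -> 'I_(2 * m)) (X : tensor F n m1)
  (G : {ffun 'I_(2 * m2) -> 'I_n} -> F) (Z : tensor F n m) s (c : bool)
  (small : 'I_(2 * m2) -> bool) (Sm : 'I_s -> 'I_(2 * m2)) (sinv : 'I_(2 * m2) -> nat) :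
  (forall z, Z z = X [ffun k => z (P1 k)] * G [ffun k => z (P2 k)]) ->
  (forall k, (P1 k \in I) = (k \in I1)) ->
  (forall k, (P2 k \in I) = (small k == c)) ->
  (forall k', small (Sm k')) ->
  (forall k, small k -> sinv k < s)%N ->
  (forall k (k' : 'I_s), small k -> val k' = sinv k -> Sm k' = k) ->
  (\rank (flat I Z) <= \rank (flat I1 X) * n ^ s)%N.
Proof.
move=> hZ h1 h2 hS hs1 hs2.
pose fullS (t : {ffun 'I_s -> 'I_n}) (x : nat) :=
  if (insub x : option 'I_s) is Some k' then t k' else z0.
have hfS : forall (w : 'I_(2 * m2) -> 'I_n) k, small k ->
    fullS [ffun k' => w (Sm k')] (sinv k) = w k.
  move=> w k hk; rewrite /fullS; case: insubP => [k' _ hv|hn].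
  - by rewrite ffunE (hs2 k k').
  - by rewrite hs1 in hn.
pose f (i : 'I_#|{: rowT n I}|) := enum_rank ([ffun t => fullr (enum_val i) (P1 (val t))] : rowT n I1).
pose g (j : 'I_#|{: colT n I}|) := enum_rank ([ffun t => fullc (enum_val j) (P1 (val t))] : colT n I1).
have hX : forall i j, X [ffun k => Defs.merge (enum_val i) (enum_val j) (P1 k)] =
     flat I1 X (f i) (g j).
  move=> i j; rewrite mxE !enum_rankK; congr X; apply/ffunP => k.
  rewrite ffunE !merge_full h1; case: ifP => hk.
  - by rewrite (fullr_ffun (fun x => fullr (enum_val i) (P1 x))).
  - by rewrite (fullc_ffun (fun x => fullc (enum_val j) (P1 x))) ?hk.
have hsn : #|{: {ffun 'I_s -> 'I_n}}| = (n ^ s)%N by rewrite card_ffun !card_ord.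
case: c h2 => h2.
- pose Y : 'M[F]_(#|{: {ffun 'I_s -> 'I_n}}|, #|{: colT n I}|) := \matrix_(t, c')
     G [ffun k => if small k then fullS (enum_val t) (sinv k)
                  else fullc (enum_val c') (P2 k)].
  pose h1' (i : 'I_#|{: rowT n I}|) := enum_rank [ffun k' => fullr (enum_val i) (P2 (Sm k'))].
  have hM : forall i j, flat I Z i j = flat I1 X (f i) (g j) * Y (h1' i) j.
    move=> i j; rewrite mxE hZ hX; congr (_ * _).
    rewrite mxE enum_rankK; congr G; apply/ffunP => k; rewrite ffunE merge_full ffunE h2.
    case: (boolP (small k)) => hk /=.
    + by rewrite (hfS (fun x => fullr (enum_val i) (P2 x))).
    + done.
  apply: leq_trans (rank_prod hM) _; rewrite leq_mul2l -hsn rank_leq_row orbT //.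
- pose Y : 'M[F]_(#|{: rowT n I}|, #|{: {ffun 'I_s -> 'I_n}}|) := \matrix_(r', t)
     G [ffun k => if small k then fullS (enum_val t) (sinv k)
                  else fullr (enum_val r') (P2 k)].
  pose h2' (j : 'I_#|{: colT n I}|) := enum_rank [ffun k' => fullc (enum_val j) (P2 (Sm k'))].
  have hM : forall i j, flat I Z i j = flat I1 X (f i) (g j) * Y i (h2' j).
    move=> i j; rewrite mxE hZ hX; congr (_ * _).
    rewrite mxE enum_rankK; congr G; apply/ffunP => k; rewrite ffunE merge_full ffunE h2.
    case: (boolP (small k)) => hk /=.
    + by rewrite (hfS (fun x => fullc (enum_val j) (P2 x))).
    + done.
  apply: leq_trans (rank_prod hM) _; rewrite leq_mul2l -hsn rank_leq_col orbT //.
Qed.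
End Gen.

Lemma alN_out m (al : bvec m) x : (m.-1 <= x)%N -> alN al x = false.
Proof. by move=> h; rewrite /alN insubF // ltnNge h. Qed.

Definition extA d e (b : bool) (al : bvec d) : bvec (d + e) :=
  [ffun k : 'I_((d + e).-1) => if (val k < d.-1)%N then alN al k else ~~ b].

Lemma alN_extA d e b (al : bvec d) x :
  alN (extA e b al) x = if (x < d.-1)%N then alN al x else (x < (d + e).-1)%N && ~~ b.
Proof.
rewrite {1}/alN; case: insubP => [k hk hv|hn].
- have hv' : nat_of_ord k = x := hv.
  by rewrite ffunE ?hv ?hv'; case: ifP => // _; rewrite hk.
- have hx : ((d + e).-1 <= x)%N by rewrite leqNgt.
  by rewrite ifF ?(negbTE hn) //; apply/negbTE; rewrite -leqNgt; lia.
Qed.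

Definition extB d e (a : bool) (al : bvec e) : bvec (d + e) :=
  [ffun k : 'I_((d + e).-1) => if (val k < d.-1)%N then a
     else if val k == d.-1 then ~~ a else alN al (k - d)].

Lemma alN_extB d e a (al : bvec e) x :
  alN (extB d a al) x = if (x < d.-1)%N then (x < (d + e).-1)%N && a
     else if x == d.-1 then (x < (d + e).-1)%N && ~~ a else alN al (x - d).
Proof.
rewrite {1}/alN; case: insubP => [k hk hv|hn].
- have hv' : nat_of_ord k = x := hv.
  by rewrite ffunE ?hv ?hv' hk.
- have hx : ((d + e).-1 <= x)%N by rewrite leqNgt.
  rewrite alN_out; last by lia.
  by case: ifP => _; [|case: ifP => _]; rewrite // ltnNge hx.
Qed.

Definition P1 d e (k : 'I_(2 * d)) : 'I_(2 * (d + e)) := cast_ord (tens_eq d e) (lshift (2 * e) k).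
Definition P2 d e (k : 'I_(2 * e)) : 'I_(2 * (d + e)) := cast_ord (tens_eq d e) (rshift (2 * d) k).
Definition small m (k : 'I_(2 * m)) := (k %% 2 == 1)%N && (k.+2 <= 2 * m)%N.

Lemma Iset_pos m a (al : bvec m) b (j : 'I_(2 * m)) : (0 < m)%N ->
  (j \in Iset a al b) = if nat_of_ord j == 0%N then a
     else if j.+1 == (2 * m)%N then ~~ b
     else (alN al ((j - 1) %/ 2) == (j %% 2 == 0))%N.
Proof.
move=> hm; rewrite Iset_memE; have hj := ltn_ord j.
case: (eqVneq (nat_of_ord j) 0%N) => [j0|j0].
  rewrite j0 /=; have -> : (1 == 2 * m + b)%N = false by lia.
  by case: a.
have -> : (j.+1 == a) = false by case: a; lia.
case: (eqVneq j.+1 (2 * m)%N) => [h|h].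
  have -> : (j.+1 == 2 * m + b)%N = ~~ b by case: b; lia.
  have -> : (j.+1 < 2 * m)%N = false by lia.
  by rewrite andbF orbF.
have -> : (j.+1 == 2 * m + b)%N = false by lia.
have -> : (0 < j)%N = true by lia.
by have -> : (j.+1 < 2 * m)%N = true by lia.
Qed.

Lemma memA1 d e a b (al : bvec d) (k : 'I_(2 * d)) : (0 < d)%N -> (0 < e)%N ->
  (P1 e k \in Iset a (extA e b al) b) = (k \in Iset a al (~~ b)).
Proof.
move=> hd he; rewrite !Iset_pos ?addn_gt0 ?hd //= alN_extA.
have hk := ltn_ord k.
case: (eqVneq (nat_of_ord k) 0%N) => [k0|k0] //.
have -> : (k.+1 == 2 * (d + e))%N = false by lia.
case: (eqVneq k.+1 (2 * d)%N) => h.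
  have -> : ((k - 1) %/ 2 = d.-1)%N by lia.
  rewrite ltnn.
  have -> : (d.-1 < (d + e).-1)%N = true by lia.
  have -> : (k %% 2 == 0)%N = false by lia.
  by case: b.
by have -> : ((k - 1) %/ 2 < d.-1)%N = true by lia.
Qed.

Lemma memA2 d e a b (al : bvec d) (k : 'I_(2 * e)) : (0 < d)%N -> (0 < e)%N ->
  (P2 d k \in Iset a (extA e b al) b) = (small k == b).
Proof.
move=> hd he; rewrite !Iset_pos ?addn_gt0 ?hd //= alN_extA /small.
have hk := ltn_ord k.
have -> : (2 * d + k == 0)%N = false by lia.
case: (eqVneq (2 * d + k).+1 (2 * (d + e))%N) => h.
  have -> : (k.+2 <= 2 * e)%N = false by lia.
  by rewrite andbF; case: b.
have -> : ((2 * d + k - 1) %/ 2 < d.-1)%N = false by lia.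
have -> : ((2 * d + k - 1) %/ 2 < (d + e).-1)%N = true by lia.
have -> : (k.+2 <= 2 * e)%N = true by lia.
have -> : ((2 * d + k) %% 2 == 0)%N = ~~ (k %% 2 == 1)%N by lia.
by rewrite andbT; case: b; case: (k %% 2 == 1)%N.
Qed.

Lemma memB1 d e a b (al : bvec e) (k : 'I_(2 * e)) : (0 < d)%N -> (0 < e)%N ->
  (P2 d k \in Iset a (extB d a al) b) = (k \in Iset (~~ a) al b).
Proof.
move=> hd he; rewrite !Iset_pos ?addn_gt0 ?hd //= alN_extB.
have hk := ltn_ord k.
have -> : (2 * d + k == 0)%N = false by lia.
case: (eqVneq (nat_of_ord k) 0%N) => [k0|k0].
  rewrite k0.
  have -> : ((2 * d + 0).+1 == 2 * (d + e))%N = false by lia.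
  have -> : ((2 * d + 0 - 1) %/ 2 = d.-1)%N by lia.
  rewrite ltnn eqxx.
  have -> : (d.-1 < (d + e).-1)%N = true by lia.
  have -> : ((2 * d + 0) %% 2 == 0)%N = true by lia.
  by case: a.
have -> : ((2 * d + k).+1 == 2 * (d + e))%N = (k.+1 == 2 * e)%N by lia.
case: (eqVneq k.+1 (2 * e)%N) => // h.
have -> : ((2 * d + k - 1) %/ 2 < d.-1)%N = false by lia.
have -> : ((2 * d + k - 1) %/ 2 == d.-1)%N = false by lia.
have -> : ((2 * d + k - 1) %/ 2 - d = (k - 1) %/ 2)%N by lia.
by have -> : ((2 * d + k) %% 2 == 0)%N = (k %% 2 == 0)%N by lia.
Qed.

Lemma memB2 d e a b (al : bvec e) (k : 'I_(2 * d)) : (0 < d)%N -> (0 < e)%N ->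
  (P1 e k \in Iset a (extB d a al) b) = (small k == ~~ a).
Proof.
move=> hd he; rewrite !Iset_pos ?addn_gt0 ?hd //= alN_extB /small.
have hk := ltn_ord k.
case: (eqVneq (nat_of_ord k) 0%N) => [k0|k0].
  by rewrite k0 /=; case: a.
have -> : (k.+1 == 2 * (d + e))%N = false by lia.
have -> : ((k - 1) %/ 2 < (d + e).-1)%N = true by lia.
have -> : (k %% 2 == 0)%N = ~~ (k %% 2 == 1)%N by lia.
case: ifP => hx.
  have -> : (k.+2 <= 2 * d)%N = true by lia.
  by rewrite andbT; case: a; case: (k %% 2 == 1)%N.
have -> : ((k - 1) %/ 2 == d.-1)%N = true by lia.
have -> : (k %% 2 == 1)%N = true by lia.
have -> : (k.+2 <= 2 * d)%N = false by lia.
by case: a.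
Qed.

Local Open Scope ring_scope.

Lemma rkA (F : fieldType) n d e a b (al : bvec d) (X : tensor F n d) (B : tensor F n e) :
  (0 < n)%N -> (0 < d)%N -> (0 < e)%N ->
  (rk a (extA e b al) b (tensor_prod X B) <= rk a al (~~ b) X * n ^ e.-1)%N.
Proof.
move=> hn hd he.
pose z0 : 'I_n := Ordinal hn.
have hSm : forall k' : 'I_(e.-1), (2 * k' + 1 < 2 * e)%N.
  by move=> k'; have := ltn_ord k'; lia.
rewrite /rk; apply: (@rk_gen F n z0 (d + e) d e _ _ (fun k => P1 e k) (fun k => P2 d k) X B _ e.-1 b
   (@small e) (fun k' => Ordinal (hSm k')) (fun k => k %/ 2)%N).
- by [].
- by move=> k; rewrite memA1.
- by move=> k; rewrite memA2.
- by move=> k'; rewrite /small /=; have := ltn_ord k'; lia.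
- by move=> k; rewrite /small; lia.
- move=> k k' hk hv; have hv' : nat_of_ord k' = (k %/ 2)%N := hv.
  by apply: val_inj => /=; move: hk; rewrite /small; lia.
Qed.

Lemma rkB (F : fieldType) n d e a b (al : bvec e) (A : tensor F n d) (X : tensor F n e) :
  (0 < n)%N -> (0 < d)%N -> (0 < e)%N ->
  (rk a (extB d a al) b (tensor_prod A X) <= rk (~~ a) al b X * n ^ d.-1)%N.
Proof.
move=> hn hd he.
pose z0 : 'I_n := Ordinal hn.
have hSm : forall k' : 'I_(d.-1), (2 * k' + 1 < 2 * d)%N.
  by move=> k'; have := ltn_ord k'; lia.
rewrite /rk; apply: (@rk_gen F n z0 (d + e) e d _ _ (fun k => P2 d k) (fun k => P1 e k) X A _ d.-1 (~~ a)
   (@small d) (fun k' => Ordinal (hSm k')) (fun k => k %/ 2)%N).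
- by move=> z; rewrite /tensor_prod mulrC.
- by move=> k; rewrite memB1.
- by move=> k; rewrite memB2.
- by move=> k'; rewrite /small /=; have := ltn_ord k'; lia.
- by move=> k; rewrite /small; lia.
- move=> k k' hk hv; have hv' : nat_of_ord k' = (k %/ 2)%N := hv.
  by apply: val_inj => /=; move: hk; rewrite /small; lia.
Qed.

Lemma rk_sum (F : fieldType) n m a (al : bvec m) b (I : finType) (P : pred I)
  (T : I -> tensor F n m) :
  (rk a al b (fun z => (\sum_(i | P i) T i z)%R) <= \sum_(i | P i) rk a al b (T i))%N.
Proof.
rewrite /rk.
have -> : flat (Iset a al b) (fun z => \sum_(i | P i) T i z) =
          (\sum_(i | P i) flat (Iset a al b) (T i))%R.
  by apply/matrixP => i j; rewrite !mxE summxE; apply: eq_bigr => l _; rewrite mxE.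
exact: rank_sum_le.
Qed.

Lemma minrk_A (F : fieldType) n d e a b (A : tensor F n d) (B : tensor F n e) :
  (0 < n)%N -> (0 < d)%N -> (0 < e)%N ->
  (minrk a b (tensor_prod A B) <= minrk a (~~ b) A * n ^ e.-1)%N.
Proof.
move=> hn hd he; rewrite /minrk.
case: (ex_minnP (decomp_val_ex a (~~ b) A)) => r /asboolP [X [hX hr]] _.
case: (ex_minnP (decomp_val_ex a b (tensor_prod A B))) => r2 _ hmin.
pose W := fun al' : bvec (d + e) =>
  (fun z => (\sum_(al | extA e b al == al') tensor_prod (X al) B z)%R) : tensor F n (d + e).
apply: leq_trans (hmin (\sum_al' rk a al' b (W al'))%N _) _.
- apply/asboolP; exists W; split => //= z.
  rewrite /tensor_prod hX big_distrl /=.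
  by rewrite (partition_big (extA e b) xpredT).
- apply: (@leq_trans (\sum_al' \sum_(al | extA e b al == al')
      rk a al' b (tensor_prod (X al) B))%N).
    by apply: leq_sum => al' _; exact: rk_sum.
  apply: leq_trans (_ : (\sum_al' \sum_(al | extA e b al == al')
      (rk a al (~~ b) (X al) * n ^ e.-1) <= _)%N).
    apply: leq_sum => al' _; apply: leq_sum => al /eqP <-.
    exact: rkA.
  have -> : (\sum_al' \sum_(al | extA e b al == al')
      (rk a al (~~ b) (X al) * n ^ e.-1) =
      \sum_al (rk a al (~~ b) (X al) * n ^ e.-1))%N.
    by rewrite [RHS](partition_big (extA e b) xpredT).
  rewrite -big_distrl /= hr; exact: leqnn.
Qed.

Lemma minrk_B (F : fieldType) n d e a b (A : tensor F n d) (B : tensor F n e) :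
  (0 < n)%N -> (0 < d)%N -> (0 < e)%N ->
  (minrk a b (tensor_prod A B) <= minrk (~~ a) b B * n ^ d.-1)%N.
Proof.
move=> hn hd he; rewrite /minrk.
case: (ex_minnP (decomp_val_ex (~~ a) b B)) => r /asboolP [X [hX hr]] _.
case: (ex_minnP (decomp_val_ex a b (tensor_prod A B))) => r2 _ hmin.
pose W := fun al' : bvec (d + e) =>
  (fun z => (\sum_(al | extB d a al == al') tensor_prod A (X al) z)%R) : tensor F n (d + e).
apply: leq_trans (hmin (\sum_al' rk a al' b (W al'))%N _) _.
- apply/asboolP; exists W; split => //= z.
  rewrite /tensor_prod hX big_distrr /=.
  by rewrite (partition_big (extB d a) xpredT).
- apply: (@leq_trans (\sum_al' \sum_(al | extB d a al == al')
      rk a al' b (tensor_prod A (X al)))%N).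
    by apply: leq_sum => al' _; exact: rk_sum.
  apply: leq_trans (_ : (\sum_al' \sum_(al | extB d a al == al')
      (rk (~~ a) al b (X al) * n ^ d.-1) <= _)%N).
    apply: leq_sum => al' _; apply: leq_sum => al /eqP <-.
    exact: rkB.
  have -> : (\sum_al' \sum_(al | extB d a al == al')
      (rk (~~ a) al b (X al) * n ^ d.-1) =
      \sum_al (rk (~~ a) al b (X al) * n ^ d.-1))%N.
    by rewrite [RHS](partition_big (extB d a) xpredT).
  rewrite -big_distrl /= hr; exact: leqnn.
Qed.

Lemma minrel_le_rho (F : fieldType) n m a b (C : tensor F n m) : minrel a b C <= rho C.
Proof. by rewrite /rho; case: a; case: b; rewrite !le_max lexx ?orbT. Qed.

Lemma rel_step (n dd x y s : nat) : (0 < n)%N -> (x <= y * n ^ s)%N ->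
  (x%:R / (n ^ (dd + s.+1))%:R : rat) <= n%:R^-1 * (y%:R / (n ^ dd)%:R).
Proof.
move=> hn h.
have hN : (n%:R : rat) != 0 by rewrite pnatr_eq0 -lt0n.
have hpos : (0 : rat) <= (n ^ (dd + s.+1))%:R^-1 by rewrite invr_ge0 ler0n.
have h' : (x%:R : rat) <= (y * n ^ s)%:R by rewrite ler_nat.
apply: le_trans (ler_wpM2r hpos h') _.
rewrite expnD expnS !natrM !natrX le_eqVlt; apply/orP; left; apply/eqP.
field; apply/and3P; split => //; by rewrite expf_neq0.
Qed.

Lemma rho_bound_A (F : fieldType) n d e (A : tensor F n d) (B : tensor F n e) :
  (0 < n)%N -> (0 < d)%N -> (0 < e)%N ->
  rho (tensor_prod A B) <= n%:R^-1 * rho A.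
Proof.
move=> hn hd he.
have H : forall a b, minrel a b (tensor_prod A B) <= n%:R^-1 * rho A.
  move=> a b; rewrite /minrel.
  have -> : (n ^ (d + e) = n ^ (d + e.-1.+1))%N by rewrite prednK.
  apply: le_trans (rel_step _ hn (minrk_A a b A B hn hd he)) _.
  rewrite ler_wpM2l ?invr_ge0 ?ler0n //.
  exact: (minrel_le_rho a (~~ b) A).
by rewrite /rho !ge_max !H.
Qed.

Lemma rho_bound_B (F : fieldType) n d e (A : tensor F n d) (B : tensor F n e) :
  (0 < n)%N -> (0 < d)%N -> (0 < e)%N ->
  rho (tensor_prod A B) <= n%:R^-1 * rho B.
Proof.
move=> hn hd he.
have H : forall a b, minrel a b (tensor_prod A B) <= n%:R^-1 * rho B.
  move=> a b; rewrite /minrel.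
  have -> : (n ^ (d + e) = n ^ (e + d.-1.+1))%N by rewrite prednK // addnC.
  apply: le_trans (rel_step _ hn (minrk_B a b A B hn hd he)) _.
  rewrite ler_wpM2l ?invr_ge0 ?ler0n //.
  exact: (minrel_le_rho (~~ a) b B).
by rewrite /rho !ge_max !H.
Qed.

Theorem lemma4p9 (F : fieldType) (n d e : nat) (hn : (1 <= n)%N) (hd : (1 <= d)%N)
  (he : (1 <= e)%N) (A : tensor F n d) (B : tensor F n e) :
  rho (tensor_prod A B) <= (n%:R : rat)^-1 * Num.min (rho A) (rho B).
Proof.
have [h|h] := leP (rho A) (rho B).
- by apply: rho_bound_A.
- by apply: rho_bound_B.
Qed.
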